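(* Let $d$ be a positive integer and let $X_1,\dots,X_d$ be i.i.d. random variables taking natural number values. Let $\kappa=\min\{n\in\mathbb{N}:\Pr[X_1>n]<1/d\}$. Then $$\mathbb{E}[\max(X_1,\dots,X_d)]=\Theta\Big(\kappa+d\sum_{n=\kappa}^\infty\Pr[X_1>n]\Big),$$ with universal constants. *)

(* Defs.v *)
From HB Require Import structures.
From mathcomp Require Import all_boot all_order all_algebra.
From mathcomp Require Import all_classical all_reals all_analysis.
Set Implicit Arguments. Unset Strict Implicit. Unset Printing Implicit Defensive.
Import Order.TTheory GRing.Theory Num.Theory.
Local Open Scope classical_set_scope.
Local Open Scope ring_scope.
Local Open Scope ereal_scope.

Definition nat_rvs {d0 : measure_display} {T : measurableType d0}
  (d : nat) (X : 'I_d -> T -> nat) : Prop :=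
  forall (i : 'I_d) (n : nat), measurable [set x | X i x = n].

Definition mutually_independent {d0 : measure_display} {T : measurableType d0}
  {R : realType} (P : probability T R) (d : nat) (X : 'I_d -> T -> nat) : Prop :=
  forall A : 'I_d -> set nat,
    P [set x | forall i, A i (X i x)] = \prod_(i < d) P (X i @^-1` A i).

Definition identically_distributed {d0 : measure_display} {T : measurableType d0}
  {R : realType} (P : probability T R) (d : nat) (X : 'I_d -> T -> nat) : Prop :=
  forall (i j : 'I_d) (A : set nat), P (X i @^-1` A) = P (X j @^-1` A).

(* Main.v *)
Require Import Defs.
From HB Require Import structures.
From mathcomp Require Import all_boot all_order all_algebra.
From mathcomp Require Import all_classical all_reals all_analysis.
From mathcomp Require Import measurable_realfun ring lra zify.
Import Order.TTheory GRing.Theory Num.Theory.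
Local Open Scope classical_set_scope.
Local Open Scope ring_scope.
Local Open Scope ereal_scope.
Lemma gm_of_level {d0 : measure_display} {T : measurableType d0} (Y : T -> nat) :
  (forall n, measurable [set x | Y x = n]) -> forall n, measurable [set x | (n < Y x)%N].
Proof.
move=> hY n.
have -> : [set x | (n < Y x)%N] = \bigcup_k [set x | Y x = (k + n.+1)%N].
  apply/seteqP; split => x /=.
  - move=> h; exists (Y x - n.+1)%N => //=; rewrite subnK //.
  - by case=> k _ /= ->; rewrite ltn_addl.
by apply: bigcupT_measurable => k; exact: hY.
Qed.

Lemma level_of_gm {d0 : measure_display} {T : measurableType d0} (Y : T -> nat) :
  (forall n, measurable [set x | (n < Y x)%N]) -> forall n, measurable [set x | Y x = n].
Proof.
move=> hY [|n].
  have -> : [set x | Y x = 0%N] = ~` [set x | (0 < Y x)%N].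
    apply/seteqP; split => x /=; first by move=> ->.
    by move/negP; rewrite lt0n negbK => /eqP.
  exact/measurableC/hY.
have -> : [set x | Y x = n.+1] = [set x | (n < Y x)%N] `\` [set x | (n.+1 < Y x)%N].
  apply/seteqP; split => x /=; first by move=> ->; split => //; rewrite ltnn.
  by case=> h1 /negP; rewrite -leqNgt => h2; apply/eqP; rewrite eqn_leq h1 h2.
exact: measurableD.
Qed.

Lemma mfun_nat {d0 : measure_display} {T : measurableType d0} {R : realType} (Y : T -> nat)
  (g : nat -> \bar R) :
  (forall n, measurable [set x | (n < Y x)%N]) -> measurable_fun [set: T] (g \o Y).
Proof.
move=> /level_of_gm hY _ B mB; rewrite setTI.
have -> : (fun x => g (Y x)) @^-1` B = \bigcup_k ([set x | Y x = k] `&` [set _ | B (g k)]).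
  apply/seteqP; split => x /=.
  - by move=> h; exists (Y x).
  - by case=> k _ [/= -> ].
apply: bigcupT_measurable => k; apply: measurableI; first exact: hY.
case: (pselect (B (g k))) => h.
  by have -> : [set _ : T | B (g k)] = setT by apply/seteqP; split.
by have -> : [set _ : T | B (g k)] = set0 by apply/seteqP; split.
Qed.

Lemma gm_max {d0 : measure_display} {T : measurableType d0} (d : nat) (X : 'I_d -> T -> nat) :
  (forall i n, measurable [set x | (n < X i x)%N]) ->
  forall n, measurable [set x | (n < \max_(i < d) X i x)%N].
Proof.
move=> hX n.
have -> : [set x | (n < \max_(i < d) X i x)%N] = \big[setU/set0]_(i < d) [set x | (n < X i x)%N].
  apply/seteqP; split => x /=.
  - rewrite ltnNge => /bigmax_leqP h.
    rewrite -bigcup_seq; apply: contrapT => hn; apply: h => i _.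
    rewrite leqNgt; apply/negP => hi; apply: hn; exists i => //=.
    by rewrite mem_index_enum.
  - rewrite -bigcup_seq => -[i _ /= hi].
    by apply: (leq_trans hi); exact: (@leq_bigmax (ordinal d) (fun j => X j x) i).
apply: bigsetU_measurable => i _; exact: hX.
Qed.

Lemma gm_sub {d0 : measure_display} {T : measurableType d0} (Y : T -> nat) m :
  (forall n, measurable [set x | (n < Y x)%N]) ->
  forall n, measurable [set x | (n < Y x - m)%N].
Proof.
move=> hY n.
have -> : [set x | (n < Y x - m)%N] = [set x | (m + n < Y x)%N].
  by apply/seteqP; split => x /=; rewrite ltn_subRL.
exact: hY.
Qed.
Lemma pointwise_layer {R : realType} (k m : nat) :
  (((k - m)%N%:R : R)%:E) = \sum_(n <oo) ((((n + m < k)%N : nat)%:R : R)%:E).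
Proof.
rewrite (@nneseries_split _ _ 0 (k - m)); last by move=> j _; rewrite lee_fin.
rewrite add0n eseries0 ?adde0; last first.
  by move=> i hi _; have -> : (i + m < k)%N = false by lia.
rewrite sumEFin; congr (_%:E).
rewrite (@eq_big_nat _ _ _ 0 (k - m) _ (fun _ => 1%R)); last first.
  by move=> i hi; have -> : (i + m < k)%N = true by lia.
by rewrite sumr_const_nat subn0.
Qed.
Lemma layer {d0 : measure_display} {T : measurableType d0} {R : realType}
  (P : probability T R) (Y : T -> nat) m :
  (forall n, measurable [set x | (n < Y x)%N]) ->
  \int[P]_x (((Y x - m)%N%:R : R)%:E) = \sum_(m <= n <oo) P [set x | (n < Y x)%N].
Proof.
move=> hY.
rewrite -nneseries_addn; last by move=> i; exact: measure_ge0.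
transitivity (\int[P]_x \sum_(n <oo) ((\1_[set x | (n + m < Y x)%N] x : R)%:E)).
  apply: eq_integral => x _; rewrite pointwise_layer; apply: eq_eseriesr => n _.
  rewrite indicE; case: (boolP (x \in [set x0 | (n + m < Y x0)%N])) => [/set_mem/= -> // | h].
  by case: ltnP => // h'; case/negP: h; apply/mem_set.
have mf : forall n, measurable_fun setT (fun x => (\1_[set x | (n + m < Y x)%N] x : R)%:E).
  by move=> n; apply/measurable_EFinP; apply: measurable_indic; exact: hY.
have f0 : forall n x, setT x -> 0 <= (\1_[set x | (n + m < Y x)%N] x : R)%:E.
  by move=> n x _; rewrite lee_fin.
rewrite (integral_nneseries _ _ mf f0) //.
by apply: eq_eseriesr => n _; rewrite integral_indic ?setIT //; exact: hY.
Qed.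
Local Open Scope ring_scope.
Lemma bern_aux (R : realFieldType) (r : R) (d : nat) : 0 <= r -> r <= 1 ->
  0 <= (1 - r) ^+ d /\ (1 - r)^+d * (1 + d%:R * r) <= 1.
Proof.
move=> r0 r1; elim: d => [|d [IH0 IH]]; first by rewrite expr0 mul0r addr0 mul1r.
have h1 : 0 <= 1 - r by lra.
split; first by rewrite exprS mulr_ge0.
rewrite exprS -natr1.
set y := (1 - r) ^+ d in IH0 IH *.
have -> : (1 - r) * y * (1 + (d%:R + 1) * r) = y * (1 + d%:R * r) - y * (d%:R * r^+2 + r ^+ 2) by rewrite expr2; ring.
have : 0 <= y * (d%:R * r ^+ 2 + r ^+ 2) by apply: mulr_ge0 => //; apply: addr_ge0; [apply: mulr_ge0|]; rewrite ?ler0n ?sqr_ge0.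
lra.
Qed.

Lemma lowA (R : realFieldType) (r : R) (d : nat) : 0 <= r -> r <= 1 ->
  1 <= d%:R * r -> 1 <= 2 * (1 - (1 - r) ^+ d).
Proof.
move=> r0 r1 h; have [h0 h2] := @bern_aux _ r d r0 r1.
set y := (1 - r) ^+ d in h0 h2 *; set t := d%:R * r in h h2 *.
nra.
Qed.

Lemma lowB (R : realFieldType) (r : R) (d : nat) : 0 <= r -> r <= 1 ->
  d%:R * r <= 1 -> d%:R * r <= 2 * (1 - (1 - r) ^+ d).
Proof.
move=> r0 r1 h; have [h0 h2] := @bern_aux _ r d r0 r1.
have t0 : 0 <= d%:R * r by apply: mulr_ge0; rewrite ?ler0n.
set y := (1 - r) ^+ d in h0 h2 *; set t := d%:R * r in h h2 t0 *.
nra.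
Qed.
Local Open Scope ereal_scope.
Lemma upper {d0 : measure_display} {T : measurableType d0} {R : realType}
  (P : probability T R) (d : nat) (X : 'I_d -> T -> nat)
  (gmX : forall i n, measurable [set x | (n < X i x)%N])
  (p : nat -> \bar R) (pid : forall i n, P [set x | (n < X i x)%N] = p n) (kappa : nat) :
  \int[P]_x (((\max_(i < d) X i x)%N%:R : R)%:E)
   <= (kappa%:R : R)%:E + (d%:R : R)%:E * \sum_(kappa <= n <oo) p n.
Proof.
have mXi : forall i, measurable_fun setT (fun x => (((X i x - kappa)%N%:R : R)%:E)).
  by move=> i; apply: (mfun_nat (X i) (fun k => (((k - kappa)%N%:R : R)%:E))); exact: gmX.
have mS : measurable_fun setT (fun x => \sum_(i < d) (((X i x - kappa)%N%:R : R)%:E)).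
  exact: emeasurable_sum.
have S0 : forall x, setT x -> 0 <= \sum_(i < d) (((X i x - kappa)%N%:R : R)%:E).
  by move=> x _; apply: sume_ge0 => i _; rewrite lee_fin.
have H : \int[P]_x (((\max_(i < d) X i x)%N%:R : R)%:E) <= (\int[P]_x ((cst (kappa%:R : R)%:E) x + \sum_(i < d) (((X i x - kappa)%N%:R : R)%:E))).
  apply: ge0_le_integral => //; try by move=> x _; rewrite lee_fin.
  - exact: (mfun_nat (fun x => \max_(i < d) X i x) (fun k => ((k%:R : R)%:E)) (@gm_max _ _ d X gmX)).
  - exact: emeasurable_funD.
  - move=> x _; rewrite /cst sumEFin -EFinD lee_fin -natr_sum -natrD ler_nat.
    apply/bigmax_leqP => i _; rewrite (bigD1 i) //=; lia.
apply: (le_trans H).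
rewrite ge0_integralD //; last by move=> x _; rewrite lee_fin.
rewrite integral_cst //.
rewrite ge0_integral_sum //; try by move=> i x _; rewrite lee_fin.
have h1 : forall y : \bar R, y = 1 -> (kappa%:R : R)%:E * y <= (kappa%:R : R)%:E by move=> y ->; rewrite mule1.
apply: leeD; first exact/h1/probability_setT.
rewrite (eq_bigr (fun _ => \sum_(kappa <= n <oo) p n)); last first.
  move=> i _; rewrite layer //; apply: eq_eseriesr => n _; exact: pid.
rewrite big_const_ord iter_addr adde0 mule_natl. exact: lexx.
Qed.
Lemma qform {d0 : measure_display} {T : measurableType d0} {R : realType}
  (P : probability T R) (d : nat) (X : 'I_d -> T -> nat)
  (gmX : forall i n, measurable [set x | (n < X i x)%N])
  (hind : mutually_independent P X)
  (p : nat -> \bar R) (pid : forall i n, P [set x | (n < X i x)%N] = p n)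
  (pfin : forall n, p n \is a fin_num) (n : nat) :
  P [set x | (n < \max_(i < d) X i x)%N] = (1 - (1 - fine (p n)) ^+ d)%:E.
Proof.
set A := [set x | forall i, (X i x <= n)%N].
have eA : [set x | (n < \max_(i < d) X i x)%N] = ~` A.
  apply/seteqP; split => x /=.
  - by rewrite ltnNge => /negP h hA; apply: h; apply/bigmax_leqP => i _; exact: hA.
  - move=> h; rewrite ltnNge; apply/negP => /bigmax_leqP h'; apply: h => i; exact: h'.
have mA : measurable A.
  have -> : A = ~` [set x | (n < \max_(i < d) X i x)%N] by rewrite eA setCK.
  exact/measurableC/(@gm_max _ _ d X gmX).
rewrite eA probability_setC //.
have hA : P A = \prod_(i < d) P (X i @^-1` [set k | (k <= n)%N]).
  exact: (hind (fun _ => [set k | (k <= n)%N])).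
rewrite hA.
have hi : forall i, P (X i @^-1` [set k | (k <= n)%N]) = (1 - fine (p n))%:E.
  move=> i.
  have -> : X i @^-1` [set k | (k <= n)%N] = ~` [set x | (n < X i x)%N].
    apply/seteqP; split => x /=; first by rewrite leqNgt => /negP.
    by move/negP; rewrite -leqNgt.
  by rewrite probability_setC // pid EFinB fineK.
rewrite (eq_bigr (fun _ => (1 - fine (p n))%:E)); last by move=> i _; exact: hi.
rewrite prodEFin prodr_const card_ord -EFinB //.
Qed.
Lemma lower {d0 : measure_display} {T : measurableType d0} {R : realType}
  (P : probability T R) (d : nat) (X : 'I_d -> T -> nat)
  (gmX : forall i n, measurable [set x | (n < X i x)%N])
  (hind : mutually_independent P X)
  (p : nat -> \bar R) (pid : forall i n, P [set x | (n < X i x)%N] = p n)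
  (pfin : forall n, p n \is a fin_num)
  (p0 : forall n, (0 <= fine (p n))%R) (p1 : forall n, (fine (p n) <= 1)%R)
  (kappa : nat)
  (hlo : forall n, (n < kappa)%N -> (1 <= d%:R * fine (p n))%R)
  (hhi : forall n, (kappa <= n)%N -> (d%:R * fine (p n) <= 1)%R) :
  (kappa%:R : R)%:E + (d%:R : R)%:E * \sum_(kappa <= n <oo) p n
   <= (2%:R : R)%:E * \int[P]_x (((\max_(i < d) X i x)%N%:R : R)%:E).
Proof.
have q0 : forall n, 0 <= P [set x | (n < \max_(i < d) X i x)%N] by move=> n; exact: measure_ge0.
have E : \int[P]_x (((\max_(i < d) X i x)%N%:R : R)%:E)
    = \sum_(0 <= n <oo) P [set x | (n < \max_(i < d) X i x)%N].
  rewrite -(layer P _ 0 (@gm_max _ _ d X gmX)); apply: eq_integral => x _; rewrite subn0 //.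
rewrite E (@nneseries_split _ _ 0 kappa) ?add0n; last by move=> k _; exact: q0.
rewrite ge0_muleDr; last 2 first.
- by apply: sume_ge0 => k _; exact: q0.
- by apply: nneseries_ge0 => k _ _; exact: q0.
apply: leeD.
- have -> : (kappa%:R : R)%:E = \sum_(0 <= n < kappa) (1 : R)%:E by rewrite sumEFin sumr_const_nat subn0.
  rewrite ge0_sume_distrr; last by move=> k _; exact: q0.
  rewrite big_nat_cond [X in _ <= X]big_nat_cond; apply: lee_sum => n /andP[/andP[_ hn] _].
  rewrite (@qform _ _ _ P d X gmX hind p pid pfin) -EFinM lee_fin.
  exact: lowA (p0 n) (p1 n) (hlo n hn).
- rewrite -nneseriesZl; last by move=> k _; rewrite -(fineK (pfin k)) lee_fin.
  rewrite -nneseriesZl; last by move=> k _; exact: q0.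
  rewrite -(@nneseries_addn R (fun i => (d%:R : R)%:E * p i)); last first.
    by move=> k; rewrite -(fineK (pfin k)) -EFinM lee_fin; apply: mulr_ge0.
  rewrite -(@nneseries_addn R (fun i => (2%:R : R)%:E * P [set x | (i < \max_(i0 < d) X i0 x)%N])); last first.
    by move=> k; apply: mule_ge0; [rewrite lee_fin ler0n | exact: q0].
  apply: lee_nneseries => [k _ _|k _].
    by rewrite -(fineK (pfin _)) -EFinM lee_fin; apply: mulr_ge0.
  rewrite (@qform _ _ _ P d X gmX hind p pid pfin) -(fineK (pfin _)) -!EFinM lee_fin.
  apply: lowB => //; apply: hhi; exact: leq_addl.
Qed.
Theorem mainTheorem6 :
  exists C : nat, (0 < C)%N /\
  forall (R : realType) (d0 : measure_display) (T : measurableType d0)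
    (P : probability T R) (d : nat) (hd : (0 < d)%N)
    (X : 'I_d -> T -> nat),
    nat_rvs X -> mutually_independent P X -> identically_distributed P X ->
    forall kappa : nat,
      P [set x | (kappa < X (Ordinal hd) x)%N] < ((d%:R : R)^-1)%:E ->
      (forall m : nat, (m < kappa)%N ->
          ((d%:R : R)^-1)%:E <= P [set x | (m < X (Ordinal hd) x)%N]) ->
    let EMax := \int[P]_x (((\max_(i < d) X i x)%N)%:R : R)%:E in
    let S := (kappa%:R : R)%:E
             + (d%:R : R)%:E * \sum_(kappa <= n <oo) P [set x | (n < X (Ordinal hd) x)%N] in
    S <= (C%:R : R)%:E * EMax /\ EMax <= (C%:R : R)%:E * S.
Proof.
exists 2%N; split => //.
move=> R d0 T P d hd X hnat hind hid kappa hk1 hk2 EMax S.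
pose p n := P [set x | (n < X (Ordinal hd) x)%N].
have gmX : forall i n, measurable [set x | (n < X i x)%N].
  by move=> i; apply: gm_of_level; exact: hnat.
have pid : forall i n, P [set x | (n < X i x)%N] = p n.
  by move=> i n; exact: (hid i (Ordinal hd) [set k | (n < k)%N]).
have pfin : forall n, p n \is a fin_num.
  by move=> n; apply: fin_num_measure; exact: gmX.
have p0 : forall n, (0 <= fine (p n))%R by move=> n; apply: fine_ge0; exact: measure_ge0.
have p1 : forall n, (fine (p n) <= 1)%R.
  by move=> n; rewrite -lee_fin fineK //; apply: probability_le1; exact: gmX.
have dpos : (0 < (d%:R : R))%R by rewrite ltr0n.
have du : ((d%:R : R) * (d%:R)^-1 = 1)%R by rewrite mulfV // lt0r_neq0.
have hlo : forall n, (n < kappa)%N -> (1 <= d%:R * fine (p n))%R.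
  move=> n hn; have h0 : ((d%:R : R)^-1)%:E <= p n := hk2 n hn.
  have h : ((d%:R : R)^-1 <= fine (p n))%R by rewrite -lee_fin fineK.
  set u := ((d%:R : R)^-1)%R in h du; set r := fine (p n) in h *; nra.
have hhi : forall n, (kappa <= n)%N -> (d%:R * fine (p n) <= 1)%R.
  move=> n hn.
  have hle : p n <= p kappa.
    apply: le_measure; rewrite ?inE; try exact: gmX.
    by move=> x /= h; apply: leq_ltn_trans h.
  have h : p n < ((d%:R : R)^-1)%:E := le_lt_trans hle hk1.
  have {}h : (fine (p n) < (d%:R : R)^-1)%R by rewrite -lte_fin fineK.
  set u := ((d%:R : R)^-1)%R in h du; set r := fine (p n) in h *; nra.
have HS := lower P d X gmX hind p pid pfin p0 p1 kappa hlo hhi.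
have HE := upper P d X gmX p pid kappa.
have S0 : 0 <= S.
  apply: adde_ge0; first by rewrite lee_fin.
  apply: mule_ge0; first by rewrite lee_fin.
  by apply: nneseries_ge0 => k _ _; exact: measure_ge0.
split; first exact: HS.
have e2 : (2%:R : R)%:E * S = S + S by rewrite mule_natl.
apply: (le_trans HE); rewrite e2; exact: leeDl.
Qed.
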